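(* Let $\mathsf{C}$ be a categorical model of type theory, $\Gamma$ an object and $\Gamma.\Delta$ a context extension of $\Gamma$ with dependent projection $p_\Delta\colon\Gamma.\Delta\to\Gamma$. Then the pullback functor $p_\Delta^*\colon(\mathsf{C}\twoheadrightarrow\Gamma)\to(\mathsf{C}\twoheadrightarrow\Gamma.\Delta)$ admits a right adjoint.
   Context: A contextual category is a small category $\mathsf{C}$ with grading $\mathrm{ob}\,\mathsf{C}=\coprod_n\mathrm{ob}_n\mathsf{C}$, unique terminal object $\diamond$ of degree $0$, maps $\mathrm{ft}\colon\mathrm{ob}_{n+1}\to\mathrm{ob}_n$, basic dependent projections $p_X\colon X\to\mathrm{ft}X$, and strictly functorial chosen pullbacks of $p_X$ along any map into $\mathrm{ft}X$. Dependent projections are composites of basic ones; a context extension of $\Gamma$ is an object $\Gamma.\Delta$ with a dependent projection $\Gamma.\Delta\to\Gamma$. A categorical model of type theory is a contextual category with $\Pi$-, $\Sigma$-, $\mathsf{Id}$-structures (as in the appendix of Kapulkin–Lumsdaine–Voevodsky), satisfying $\Pi$-$\eta$ and Functional Extensionality. $\mathsf{C}$ is a fibration category with fibrations the maps isomorphic to dependent projections (and weak equivalences the bi-invertible maps). For an object $\Gamma$, $\mathsf{C}\twoheadrightarrow\Gamma$ is the full subcategory of the slice $\mathsf{C}/\Gamma$ on fibrations into $\Gamma$; $p_\Delta^*$ is pullback along $p_\Delta$. *)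

(* Defs.v *)
(* Categories are encoded "one-sorted":
   a type of objects, a type of morphisms, dom/cod, identities and a total
   composition whose laws are required only on composable pairs.  This avoids
   transports along equalities of objects (needed because in a contextual
   category ft (f^* X) = dom f holds only propositionally). *)
Set Implicit Arguments.
Unset Strict Implicit.

Record Cat : Type := {
  Ob : Type;
  Mor : Type;
  dom : Mor -> Ob;
  cod : Mor -> Ob;
  idm : Ob -> Mor;
  comp : Mor -> Mor -> Mor;          (* comp g f = g o f *)
  dom_idm : forall X, dom (idm X) = X;
  cod_idm : forall X, cod (idm X) = X;
  dom_comp : forall g f, cod f = dom g -> dom (comp g f) = dom f;
  cod_comp : forall g f, cod f = dom g -> cod (comp g f) = cod g;
  comp_idl : forall f, comp (idm (cod f)) f = f;
  comp_idr : forall f, comp f (idm (dom f)) = f;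
  comp_assoc : forall h g f, cod f = dom g -> cod g = dom h ->
      comp h (comp g f) = comp (comp h g) f
}.

Notation "g ∘ f" := (comp g f) (at level 40, left associativity).

Definition hom {C : Cat} (X Y : Ob C) (f : Mor C) : Prop :=
  dom f = X /\ cod f = Y.

Definition is_terminal {C : Cat} (T : Ob C) : Prop :=
  forall X : Ob C, exists! f : Mor C, hom X T f.

Definition is_iso {C : Cat} (i : Mor C) : Prop :=
  exists k : Mor C, hom (cod i) (dom i) k /\ k ∘ i = idm (dom i) /\ i ∘ k = idm (cod i).

(* [is_pullback f g p1 p2]: the square
      P --p2--> B
      |p1       |g
      v         v
      A --f---> D      is a pullback square. *)
Definition is_pullback {C : Cat} (f g p1 p2 : Mor C) : Prop :=
  cod f = cod g /\ dom p1 = dom p2 /\ cod p1 = dom f /\ cod p2 = dom g /\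
  f ∘ p1 = g ∘ p2 /\
  forall a b : Mor C, dom a = dom b -> cod a = dom f -> cod b = dom g ->
    f ∘ a = g ∘ b ->
    exists! u : Mor C, hom (dom a) (dom p1) u /\ p1 ∘ u = a /\ p2 ∘ u = b.

Record CtxCat : Type := {
  cc :> Cat;
  deg : Ob cc -> nat;                       (* grading ob C = coprod_n ob_n C *)
  pt : Ob cc;
  deg_pt : deg pt = 0;
  deg0_pt : forall X, deg X = 0 -> X = pt;
  pt_terminal : is_terminal pt;
  ft : Ob cc -> Ob cc;
  deg_ft : forall X n, deg X = S n -> deg (ft X) = n;
  proj : Ob cc -> Mor cc;
  proj_hom : forall X, 0 < deg X -> hom X (ft X) (proj X);
  pb : Mor cc -> Ob cc -> Ob cc;
  qq : Mor cc -> Ob cc -> Mor cc;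
  pb_deg : forall f X, 0 < deg X -> cod f = ft X -> deg (pb f X) = S (deg (dom f));
  pb_ft : forall f X, 0 < deg X -> cod f = ft X -> ft (pb f X) = dom f;
  qq_hom : forall f X, 0 < deg X -> cod f = ft X -> hom (pb f X) X (qq f X);
  pb_square : forall f X, 0 < deg X -> cod f = ft X ->
      is_pullback (proj X) f (qq f X) (proj (pb f X));
  pb_id : forall X, 0 < deg X -> pb (idm (ft X)) X = X;
  qq_id : forall X, 0 < deg X -> qq (idm (ft X)) X = idm X;
  pb_comp : forall f g X, 0 < deg X -> cod f = ft X -> cod g = dom f ->
      pb (f ∘ g) X = pb g (pb f X);
  qq_comp : forall f g X, 0 < deg X -> cod f = ft X -> cod g = dom f ->
      qq (f ∘ g) X = qq f X ∘ qq g (pb f X)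
}.

Section CtxNotions.
Variable C : CtxCat.

(* s is a section of p_X, i.e. a term of type X in context ft X *)
Definition is_section (X : Ob C) (s : Mor C) : Prop :=
  0 < deg X /\ hom (ft X) X s /\ proj X ∘ s = idm (ft X).

Definition sec_reindex (f : Mor C) (X : Ob C) (s t : Mor C) : Prop :=
  cod f = ft X /\ is_section (pb f X) t /\ qq f X ∘ t = s ∘ f.

(* d : Gamma.A -> Gamma.A.p_A^*A is the diagonal (generic variable) *)
Definition is_diag (A : Ob C) (d : Mor C) : Prop :=
  is_section (pb (proj A) A) d /\ qq (proj A) A ∘ d = idm A.

Definition is_pairmap (X : Ob C) (a b m : Mor C) : Prop :=
  hom (ft X) (pb (proj X) X) m /\
  proj (pb (proj X) X) ∘ m = a /\ qq (proj X) X ∘ m = b.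

(* A is a type in context ft A, and B a type in context A *)
Definition ty2 (A B : Ob C) : Prop := 0 < deg A /\ 0 < deg B /\ ft B = A.

Fixpoint dproj (n : nat) (X : Ob C) : Mor C :=
  match n with
  | 0 => idm X
  | S n' => dproj n' (ft X) ∘ proj X
  end.

Fixpoint ftn (n : nat) (X : Ob C) : Ob C :=
  match n with
  | 0 => X
  | S n' => ftn n' (ft X)
  end.

Definition is_dep_proj (pi : Mor C) : Prop :=
  exists n X, n <= deg X /\ pi = dproj n X.

Definition is_fibration (f : Mor C) : Prop :=
  exists pi i j : Mor C, is_dep_proj pi /\ is_iso i /\ is_iso j /\
    hom (dom f) (dom pi) i /\ hom (cod f) (cod pi) j /\ pi ∘ i = j ∘ f.

(* Stated through universal arrows (Mac Lane IV.1, Thm 2):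
   for every object e : E ->> Delta there is an object r : R ->> Gamma together with
   (a pullback pi^* R and) a counit eps : pi^* R -> E over Delta, terminal among all
   arrows pi^* T -> E over Delta, T ranging over (C ->> Gamma).  The formulation
   quantifies over all pullback squares, hence is independent of a choice of pullbacks. *)
Definition pullback_has_right_adjoint (Gamma Delta : Ob C) (pi : Mor C) : Prop :=
  hom Delta Gamma pi /\
  forall e : Mor C, is_fibration e -> cod e = Delta ->
  exists (r px pr eps : Mor C),
    is_fibration r /\ cod r = Gamma /\
    is_pullback pi r px pr /\
    hom (dom px) (dom e) eps /\ e ∘ eps = px /\
    forall (t qx qt phi : Mor C),
      is_fibration t -> cod t = Gamma ->
      is_pullback pi t qx qt ->
      hom (dom qx) (dom e) phi -> e ∘ phi = qx ->
      exists! psi : Mor C,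
        hom (dom t) (dom r) psi /\ r ∘ psi = t /\
        forall w : Mor C, hom (dom qx) (dom px) w -> pr ∘ w = psi ∘ qt -> px ∘ w = qx ->
          eps ∘ w = phi.

End CtxNotions.

Record PiStr (C : CtxCat) : Type := {
  Pi : Ob C -> Ob C -> Ob C;
  lam : Ob C -> Ob C -> Mor C -> Mor C;
  app : Ob C -> Ob C -> Mor C -> Mor C -> Mor C;
  Pi_form : forall A B, ty2 A B -> 0 < deg (Pi A B) /\ ft (Pi A B) = ft A;
  lam_sec : forall A B b, ty2 A B -> is_section B b -> is_section (Pi A B) (lam A B b);
  app_sec : forall A B k a, ty2 A B -> is_section (Pi A B) k -> is_section A a ->
      is_section (pb a B) (app A B k a);
  Pi_beta : forall A B b a, ty2 A B -> is_section B b -> is_section A a ->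
      sec_reindex a B b (app A B (lam A B b) a);
  Pi_stab : forall A B f, ty2 A B -> cod f = ft A ->
      pb f (Pi A B) = Pi (pb f A) (pb (qq f A) B);
  lam_stab : forall A B b f b', ty2 A B -> is_section B b -> cod f = ft A ->
      sec_reindex (qq f A) B b b' ->
      sec_reindex f (Pi A B) (lam A B b) (lam (pb f A) (pb (qq f A) B) b');
  app_stab : forall A B k a f k' a', ty2 A B -> is_section (Pi A B) k ->
      is_section A a -> cod f = ft A ->
      sec_reindex f (Pi A B) k k' -> sec_reindex f A a a' ->
      sec_reindex f (pb a B) (app A B k a) (app (pb f A) (pb (qq f A) B) k' a')
}.

(* Pi-eta:  lambda x. k x = k *)
Definition Pi_eta (C : CtxCat) (P : PiStr C) : Prop :=
  forall A B k k' d, ty2 A B -> is_section (Pi P A B) k ->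
    sec_reindex (proj A) (Pi P A B) k k' -> is_diag A d ->
    lam P A B (app P (pb (proj A) A) (pb (qq (proj A) A) B) k' d) = k.

Record SigStr (C : CtxCat) : Type := {
  Sig : Ob C -> Ob C -> Ob C;
  pair : Ob C -> Ob C -> Mor C;
  split : Ob C -> Ob C -> Ob C -> Mor C -> Mor C;
  Sig_form : forall A B, ty2 A B -> 0 < deg (Sig A B) /\ ft (Sig A B) = ft A;
  pair_hom : forall A B, ty2 A B -> hom B (Sig A B) (pair A B) /\
      proj (Sig A B) ∘ pair A B = proj A ∘ proj B;
  split_sec : forall A B X d, ty2 A B -> 0 < deg X -> ft X = Sig A B ->
      is_section (pb (pair A B) X) d ->
      is_section X (split A B X d) /\ sec_reindex (pair A B) X (split A B X d) d;
  Sig_stab : forall A B f, ty2 A B -> cod f = ft A ->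
      pb f (Sig A B) = Sig (pb f A) (pb (qq f A) B);
  pair_stab : forall A B f, ty2 A B -> cod f = ft A ->
      qq f (Sig A B) ∘ pair (pb f A) (pb (qq f A) B) = pair A B ∘ qq (qq f A) B;
  split_stab : forall A B X d f d', ty2 A B -> 0 < deg X -> ft X = Sig A B ->
      is_section (pb (pair A B) X) d -> cod f = ft A ->
      sec_reindex (qq (qq f A) B) (pb (pair A B) X) d d' ->
      sec_reindex (qq f (Sig A B)) X (split A B X d)
        (split (pb f A) (pb (qq f A) B) (pb (qq f (Sig A B)) X) d')
}.

Record IdStr (C : CtxCat) : Type := {
  Id : Ob C -> Ob C;
  refl : Ob C -> Mor C;
  J : Ob C -> Ob C -> Mor C -> Mor C;
  Id_form : forall A, 0 < deg A -> 0 < deg (Id A) /\ ft (Id A) = pb (proj A) A;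
  refl_hom : forall A d, 0 < deg A -> is_diag A d ->
      hom A (Id A) (refl A) /\ proj (Id A) ∘ refl A = d;
  J_sec : forall A X d, 0 < deg A -> 0 < deg X -> ft X = Id A ->
      hom A X d -> proj X ∘ d = refl A ->
      is_section X (J A X d) /\ J A X d ∘ refl A = d;
  Id_stab : forall A f, 0 < deg A -> cod f = ft A ->
      pb (qq (qq f A) (pb (proj A) A)) (Id A) = Id (pb f A);
  refl_stab : forall A f, 0 < deg A -> cod f = ft A ->
      qq (qq (qq f A) (pb (proj A) A)) (Id A) ∘ refl (pb f A) = refl A ∘ qq f A;
  J_stab : forall A X d f d', 0 < deg A -> 0 < deg X -> ft X = Id A ->
      hom A X d -> proj X ∘ d = refl A -> cod f = ft A ->
      let g := qq (qq (qq f A) (pb (proj A) A)) (Id A) in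
      hom (pb f A) (pb g X) d' -> proj (pb g X) ∘ d' = refl (pb f A) ->
      qq g X ∘ d' = d ∘ qq f A ->
      sec_reindex g X (J A X d) (J (pb f A) (pb g X) d')
}.

(* Function extensionality: in every context, a homotopy
   h : Pi(x:A). Id_B(f x, g x) yields an identification Id_{Pi(A,B)}(f, g). *)
Definition FunExt (C : CtxCat) (P : PiStr C) (I : IdStr C) : Prop :=
  forall A B f g f1 g1 d u v m m' h,
    ty2 A B -> is_section (Pi P A B) f -> is_section (Pi P A B) g ->
    sec_reindex (proj A) (Pi P A B) f f1 -> sec_reindex (proj A) (Pi P A B) g g1 ->
    is_diag A d ->
    u = app P (pb (proj A) A) (pb (qq (proj A) A) B) f1 d ->
    v = app P (pb (proj A) A) (pb (qq (proj A) A) B) g1 d ->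
    is_pairmap B u v m' -> is_pairmap (Pi P A B) f g m ->
    is_section (Pi P A (pb m' (Id I B))) h ->
    exists s, is_section (pb m (Id I (Pi P A B))) s.

Record TTModel : Type := {
  tt_ctx :> CtxCat;
  tt_Pi : PiStr tt_ctx;
  tt_Sig : SigStr tt_ctx;
  tt_Id : IdStr tt_ctx;
  tt_eta : Pi_eta tt_Pi;
  tt_funext : FunExt tt_Pi tt_Id
}.

(* Main.v *)
Require Import Defs.
From Stdlib Require Import Lia.
Set Implicit Arguments.
Unset Strict Implicit.

Section Basics.
Variable C : Cat.

Lemma hom_comp (X Y Z : Ob C) f g : hom X Y f -> hom Y Z g -> hom X Z (g ∘ f).
Proof.
  intros [H1 H2] [H3 H4]; split.
  - rewrite dom_comp; congruence.
  - rewrite cod_comp; congruence.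
Qed.

Lemma pb_unique (f g p1 p2 : Mor C) : is_pullback f g p1 p2 ->
  forall u v, dom u = dom v -> cod u = dom p1 -> cod v = dom p1 ->
  p1 ∘ u = p1 ∘ v -> p2 ∘ u = p2 ∘ v -> u = v.
Proof.
  intros (Hc & Hd & Hc1 & Hc2 & Hsq & HU) u v Hduv Hcu Hcv E1 E2.
  destruct (HU (p1 ∘ u) (p2 ∘ u)) as [w [Hw Huniq]].
  - rewrite !dom_comp; congruence.
  - rewrite cod_comp; congruence.
  - rewrite cod_comp; congruence.
  - rewrite !comp_assoc by congruence. rewrite Hsq. reflexivity.
  - assert (Eu := Huniq u). assert (Ev := Huniq v).
    rewrite dom_comp in Eu, Ev by congruence.
    rewrite <- Eu, <- Ev; repeat split; try congruence.
Qed.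
End Basics.
Lemma comp_idr' (C : Cat) (f : Mor C) Y : dom f = Y -> f ∘ idm Y = f.
Proof. intros <-; apply comp_idr. Qed.
Lemma comp_idl' (C : Cat) (f : Mor C) Y : cod f = Y -> idm Y ∘ f = f.
Proof. intros <-; apply comp_idl. Qed.
Lemma comp_rw (C : Cat) (x y z r : Mor C) : x ∘ y = z -> cod r = dom y -> cod y = dom x ->
  x ∘ (y ∘ r) = z ∘ r.
Proof. intros E H1 H2. rewrite comp_assoc by assumption. rewrite E. reflexivity. Qed.

Section Ctx.
Variable M : CtxCat.

Lemma dom_proj (X : Ob M) : 0 < deg X -> dom (proj X) = X.
Proof. intro H; apply (proj_hom H). Qed.
Lemma cod_proj (X : Ob M) : 0 < deg X -> cod (proj X) = ft X.
Proof. intro H; apply (proj_hom H). Qed.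
Lemma dom_qq (f : Mor M) X : 0 < deg X -> cod f = ft X -> dom (qq f X) = pb f X.
Proof. intros H1 H2; apply (qq_hom H1 H2). Qed.
Lemma cod_qq (f : Mor M) X : 0 < deg X -> cod f = ft X -> cod (qq f X) = X.
Proof. intros H1 H2; apply (qq_hom H1 H2). Qed.
Lemma pos_pb (f : Mor M) X : 0 < deg X -> cod f = ft X -> 0 < deg (pb f X).
Proof. intros H1 H2; rewrite pb_deg by assumption; lia. Qed.

End Ctx.

Ltac pos := first [ assumption | lia | apply pos_pb; [pos | dc0] ]
with dc0 := repeat first
  [ rewrite dom_idm | rewrite cod_idm
  | rewrite dom_comp by dc0 | rewrite cod_comp by dc0
  | rewrite dom_proj by pos | rewrite cod_proj by pos
  | rewrite dom_qq by (pos || dc0) | rewrite cod_qq by (pos || dc0)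
  | rewrite pb_ft by (pos || dc0) ];
  first [ reflexivity | congruence ].

Ltac normhyps := repeat match goal with
  | H : context[ft (pb ?f ?X)] |- _ => rewrite (@pb_ft _ f X) in H by (pos || dc0)
  | H : context[dom (qq ?f ?X)] |- _ => rewrite (@dom_qq _ f X) in H by (pos || dc0)
  | H : context[cod (qq ?f ?X)] |- _ => rewrite (@cod_qq _ f X) in H by (pos || dc0)
  | H : context[dom (proj ?X)] |- _ => rewrite (@dom_proj _ X) in H by pos
  | H : context[cod (proj ?X)] |- _ => rewrite (@cod_proj _ X) in H by pos
  | H : context[dom (?g ∘ ?f)] |- _ => rewrite (@dom_comp _ g f) in H by dc0
  | H : context[cod (?g ∘ ?f)] |- _ => rewrite (@cod_comp _ g f) in H by dc0
  | H : context[dom (idm ?X)] |- _ => rewrite (@dom_idm _ X) in H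
  | H : context[cod (idm ?X)] |- _ => rewrite (@cod_idm _ X) in H
  end.

Ltac dc := first [ dc0 | normhyps; dc0 ].

Ltac rassoc := repeat (rewrite <- comp_assoc by dc).

Section Sec.
Variable M : CtxCat.

Lemma pbmap_ex (f : Mor M) (X : Ob M) (a b : Mor M) :
  0 < deg X -> cod f = ft X -> dom a = dom b -> cod a = X -> cod b = dom f ->
  proj X ∘ a = f ∘ b ->
  exists u, hom (dom a) (pb f X) u /\ qq f X ∘ u = a /\ proj (pb f X) ∘ u = b.
Proof.
  intros H0 Hf Hab Ha Hb E.
  destruct (pb_square H0 Hf) as (Hc & Hd & Hc1 & Hc2 & Hsq & HU).
  destruct (HU a b) as [u [[[Hu1 Hu2] [Hu3 Hu4]] _]]; try (dc || assumption).
  exists u; repeat split; try assumption.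
  rewrite Hu2; dc.
Qed.

Lemma pbmap_uniq (f : Mor M) (X : Ob M) (u v : Mor M) :
  0 < deg X -> cod f = ft X -> dom u = dom v -> cod u = pb f X -> cod v = pb f X ->
  qq f X ∘ u = qq f X ∘ v -> proj (pb f X) ∘ u = proj (pb f X) ∘ v -> u = v.
Proof.
  intros H0 Hf Hd Hu Hv E1 E2.
  apply (pb_unique (pb_square H0 Hf)); try assumption; dc.
Qed.

Lemma sec_uniq (f : Mor M) (X : Ob M) (s t : Mor M) :
  0 < deg X -> cod f = ft X -> is_section (pb f X) s -> is_section (pb f X) t ->
  qq f X ∘ s = qq f X ∘ t -> s = t.
Proof.
  intros H0 Hf (Hs0 & [Hs1 Hs2] & Hs3) (Ht0 & [Ht1 Ht2] & Ht3) E.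
  apply (pbmap_uniq H0 Hf); try congruence.
Qed.

Lemma sec_of_map (f : Mor M) (X : Ob M) (g : Mor M) :
  0 < deg X -> cod f = ft X -> dom g = dom f -> cod g = X -> proj X ∘ g = f ->
  exists s, is_section (pb f X) s /\ qq f X ∘ s = g.
Proof.
  intros H0 Hf Hg1 Hg2 E.
  destruct (pbmap_ex (a := g) (b := idm (dom f)) H0 Hf) as [u [[Hu1 Hu2] [Hu3 Hu4]]];
    try dc.
  - rewrite E. rewrite comp_idr. reflexivity.
  - exists u; split; [|assumption].
    split; [apply pos_pb; assumption|]. split; [split|].
    + rewrite Hu1, pb_ft by assumption; congruence.
    + assumption.
    + rewrite pb_ft by assumption. exact Hu4.
Qed.

Lemma reindex_ex (f : Mor M) (X : Ob M) (s : Mor M) :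
  is_section X s -> cod f = ft X -> exists t, sec_reindex f X s t.
Proof.
  intros (H0 & [Hs1 Hs2] & Hs3) Hf.
  destruct (sec_of_map (g := s ∘ f) H0 Hf) as [t [Ht1 Ht2]]; try dc.
  - rewrite comp_assoc by dc. rewrite Hs3. rewrite <- Hf. apply comp_idl.
  - exists t; split; [assumption|split; assumption].
Qed.

Lemma reindex_uniq (f : Mor M) (X : Ob M) (s t t' : Mor M) : 0 < deg X ->
  sec_reindex f X s t -> sec_reindex f X s t' -> t = t'.
Proof.
  intros H0 (Hf & Ht & E) (_ & Ht' & E').
  apply (sec_uniq H0 Hf Ht Ht'). congruence.
Qed.
End Sec.

Section PiSec.
Variable M : CtxCat.
Variable P : PiStr M.
Hypothesis eta : Pi_eta P.

Lemma diag_ex (A : Ob M) : 0 < deg A -> exists d, is_diag A d.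
Proof.
  intro H0.
  destruct (sec_of_map (f := proj A) (X := A) (g := idm A) H0) as [d [Hd1 Hd2]]; try dc.
  - rewrite <- (dom_proj H0) at 2. apply comp_idr.
  - exists d; split; assumption.
Qed.

Lemma lam_inj (A B : Ob M) b1 b2 : ty2 A B -> is_section B b1 -> is_section B b2 ->
  lam P A B b1 = lam P A B b2 -> b1 = b2.
Proof.
  intros HT Hb1 Hb2 E.
  destruct HT as (HA & HB & HBA).
  destruct (diag_ex HA) as [d [Hd Hdq]].
  assert (Hq : cod (qq (proj A) A) = ft B) by dc.
  destruct (reindex_ex Hb1 Hq) as [b1' Hb1'].
  destruct (reindex_ex Hb2 Hq) as [b2' Hb2'].
  assert (HT : ty2 A B) by (repeat split; assumption).
  assert (Hpa : cod (proj A) = ft A) by dc.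
  pose proof (lam_stab P HT Hb1 Hpa Hb1') as L1.
  pose proof (lam_stab P HT Hb2 Hpa Hb2') as L2.
  rewrite E in L1.
  assert (HPi := Pi_form P HT).
  assert (E' := reindex_uniq (proj1 HPi) L1 L2).
  assert (HT' : ty2 (pb (proj A) A) (pb (qq (proj A) A) B)).
  { repeat split; try pos. dc. }
  pose proof (Pi_beta P HT' (proj1 (proj2 Hb1')) Hd) as Be1.
  pose proof (Pi_beta P HT' (proj1 (proj2 Hb2')) Hd) as Be2.
  rewrite E' in Be1.
  revert Be1 Be2.
  generalize (app P (pb (proj A) A) (pb (qq (proj A) A) B) (lam P (pb (proj A) A) (pb (qq (proj A) A) B) b2') d).
  intros a Be1 Be2.
  assert (key : forall b b', is_section B b -> sec_reindex (qq (proj A) A) B b b' ->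
            sec_reindex d (pb (qq (proj A) A) B) b' a ->
            b = qq (qq (proj A) A) B ∘ (qq d (pb (qq (proj A) A) B) ∘ a)).
  { intros b b' (_ & [Hbd Hbc] & Hbp) (_ & (_ & [Hb'd Hb'c] & _) & Hb'q) (Hdc & _ & Ha).
    destruct Hd as (_ & [Hdd Hdc'] & _).
    rewrite Ha. rewrite comp_assoc by dc. rewrite Hb'q.
    rewrite <- comp_assoc by dc. rewrite Hdq.
    rewrite HBA in Hbd. rewrite <- Hbd. symmetry; apply comp_idr. }
  rewrite (key b1 b1'), (key b2 b2'); auto.
Qed.

Lemma lam_surj (A B : Ob M) k : ty2 A B -> is_section (Pi P A B) k ->
  exists b, is_section B b /\ lam P A B b = k.
Proof.
  intros HT Hk.
  pose proof HT as (HA & HB & HBA).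
  destruct (diag_ex HA) as [d Hd].
  assert (Hpa : cod (proj A) = ft (Pi P A B)).
  { rewrite (proj2 (Pi_form P HT)). dc. }
  destruct (reindex_ex Hk Hpa) as [k' Hk'].
  exists (app P (pb (proj A) A) (pb (qq (proj A) A) B) k' d).
  split.
  2:{ apply (eta HT Hk Hk' Hd). }
  assert (HT' : ty2 (pb (proj A) A) (pb (qq (proj A) A) B)).
  { repeat split; try pos. dc. }
  assert (Hk2 : is_section (Pi P (pb (proj A) A) (pb (qq (proj A) A) B)) k').
  { destruct Hk' as (_ & H & _). rewrite (Pi_stab P HT) in H by dc. exact H. }
  pose proof (app_sec (p:=P) HT' Hk2 (proj1 Hd)) as H.
  destruct Hd as [Hds Hdq].
  rewrite <- pb_comp in H by (try pos; destruct Hds as (_ & [? ?] & _); dc).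
  rewrite Hdq in H. assert (Ei : idm A = idm (ft B)) by (rewrite HBA; reflexivity). rewrite Ei, pb_id in H by assumption. exact H.
Qed.
End PiSec.

Section PU.
Variable M : CtxCat.
Variable P : PiStr M.
Hypothesis eta : Pi_eta P.

Lemma pb_comm (f : Mor M) X : 0 < deg X -> cod f = ft X ->
  proj X ∘ qq f X = f ∘ proj (pb f X).
Proof. intros H1 H2. apply (pb_square H1 H2). Qed.

Variables A B : Ob M.
Hypothesis HT : ty2 A B.

Definition Rel (f g h : Mor M) : Prop :=
  cod f = ft A /\ exists b, is_section (pb (qq f A) B) b /\ qq (qq f A) B ∘ b = g /\
    h = qq f (Pi P A B) ∘ lam P (pb f A) (pb (qq f A) B) b.

Lemma HTf (f : Mor M) : cod f = ft A -> ty2 (pb f A) (pb (qq f A) B).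
Proof.
  destruct HT as (HA & HB & HBA). intro Hf.
  repeat split; try pos. dc.
Qed.

Lemma HPi : 0 < deg (Pi P A B) /\ ft (Pi P A B) = ft A.
Proof. exact (Pi_form P HT). Qed.

Lemma R1 f g : cod f = ft A -> hom (pb f A) B g -> proj B ∘ g = qq f A ->
  exists h, Rel f g h.
Proof.
  destruct HT as (HA & HB & HBA). intros Hf [Hg1 Hg2] E.
  destruct (sec_of_map (f := qq f A) (X := B) (g := g) HB) as [b [Hb1 Hb2]]; try dc.
  exists (qq f (Pi P A B) ∘ lam P (pb f A) (pb (qq f A) B) b).
  split; [assumption|]. exists b; split; [exact Hb1|split; [exact Hb2|reflexivity]].
Qed.

Lemma R1S f g h : Rel f g h -> hom (dom f) (Pi P A B) h /\ proj (Pi P A B) ∘ h = f.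
Proof.
  pose proof HPi as [HP1 HP2].
  destruct HT as (HA & HB & HBA).
  intros (Hf & b & Hb & Hg & ->).
  assert (Hf' : cod f = ft (Pi P A B)) by congruence.
  pose proof (lam_sec P (HTf Hf) Hb) as Hl.
  rewrite <- (Pi_stab P HT Hf) in Hl.
  destruct Hl as (Hl0 & [Hl1 Hl2] & Hl3).
  rewrite pb_ft in Hl1, Hl3 by assumption.
  split; [split|].
  - dc.
  - dc.
  - rewrite comp_assoc by dc. rewrite pb_comm by assumption.
    rewrite <- comp_assoc by dc. rewrite Hl3. apply comp_idr.
Qed.

Lemma R2 f g h h' : Rel f g h -> Rel f g h' -> h = h'.
Proof.
  destruct HT as (HA & HB & HBA).
  intros (Hf & b & Hb & Hg & ->) (_ & b' & Hb' & Hg' & ->).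
  assert (b = b') as ->; [|reflexivity].
  apply (sec_uniq (f := qq f A) HB); try assumption; [dc|congruence].
Qed.

Lemma R3 f g g' h : Rel f g h -> Rel f g' h -> g = g'.
Proof.
  pose proof HPi as [HP1 HP2].
  destruct HT as (HA & HB & HBA).
  intros (Hf & b & Hb & <- & E) (_ & b' & Hb' & <- & E').
  assert (Hf' : cod f = ft (Pi P A B)) by congruence.
  pose proof (lam_sec P (HTf Hf) Hb) as Hl.
  pose proof (lam_sec P (HTf Hf) Hb') as Hl'.
  rewrite <- (Pi_stab P HT Hf) in Hl, Hl'.
  assert (El := sec_uniq HP1 Hf' Hl Hl' (eq_trans (eq_sym E) E')).
  rewrite (lam_inj (HTf Hf) Hb Hb' El). reflexivity.
Qed.

Lemma R4 f h : cod f = ft A -> hom (dom f) (Pi P A B) h -> proj (Pi P A B) ∘ h = f ->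
  exists g, hom (pb f A) B g /\ proj B ∘ g = qq f A /\ Rel f g h.
Proof.
  pose proof HPi as [HP1 HP2].
  pose proof HT as (HA & HB & HBA).
  intros Hf [Hh1 Hh2] E.
  assert (Hf' : cod f = ft (Pi P A B)) by congruence.
  destruct (sec_of_map (f := f) (X := Pi P A B) (g := h) HP1 Hf') as [s [Hs1 Hs2]]; try dc.
  rewrite (Pi_stab P HT Hf) in Hs1.
  destruct (lam_surj eta (HTf Hf) Hs1) as [b [Hb Hbs]].
  exists (qq (qq f A) B ∘ b).
  pose proof Hb as Hbsave.
  destruct Hb as (Hb0 & [Hbd Hbc] & Hbp).
  split; [split|split].
  - dc.
  - dc.
  - rewrite comp_assoc by dc. rewrite pb_comm by (try pos; dc).
    rewrite <- comp_assoc by dc. rewrite Hbp. rewrite pb_ft by (try pos; dc).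
    apply comp_idr'; dc.
  - split; [assumption|]. exists b; split; [exact Hbsave|].
    split; [reflexivity|]. rewrite Hbs. symmetry; assumption.
Qed.

Lemma R5 f g h u : Rel f g h -> cod u = dom f ->
  Rel (f ∘ u) (g ∘ qq u (pb f A)) (h ∘ u).
Proof.
  pose proof HPi as [HP1 HP2].
  pose proof HT as (HA & HB & HBA).
  intros (Hf & b & Hb & <- & ->) Hu.
  assert (Hf' : cod f = ft (Pi P A B)) by congruence.
  assert (HAf : 0 < deg (pb f A)) by pos.
  assert (Hu' : cod u = ft (pb f A)) by dc.
  assert (Hq : cod (qq u (pb f A)) = ft (pb (qq f A) B)) by dc.
  destruct (reindex_ex Hb Hq) as [b' Hb'].
  pose proof (lam_stab P (HTf Hf) Hb Hu' Hb') as L.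
  rewrite <- (Pi_stab P HT Hf) in L.
  split; [dc|].
  exists b'.
  rewrite qq_comp by (try pos; dc).
  rewrite pb_comp with (X := B) by (try pos; dc).
  destruct Hb' as (_ & Hb's & Hb'q).
  split; [exact Hb's|split].
  - rewrite qq_comp by (try pos; dc).
    destruct Hb's as (_ & [Hd Hc] & _). destruct Hb as (_ & [Hd0 Hc0] & _).
    rewrite <- comp_assoc by dc. rewrite Hb'q. apply comp_assoc; dc.
  - destruct L as (_ & Ls & Lq).
    destruct Ls as (_ & [Ld Lc] & _).
    pose proof (lam_sec P (HTf Hf) Hb) as Hl.
    rewrite <- (Pi_stab P HT Hf) in Hl. destruct Hl as (_ & [Hld Hlc] & _).
    rewrite pb_comp with (X := A) by (try pos; dc).
    rewrite qq_comp with (X := Pi P A B) by (try pos; dc). rewrite <- (comp_assoc (h:=qq f (Pi P A B)) (g:=qq u (pb f (Pi P A B)))) by dc. rewrite Lq. rewrite comp_assoc by dc. reflexivity.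

Qed.
End PU.

Section PU2.
Variable M : CtxCat.
Variable P : PiStr M.
Hypothesis eta : Pi_eta P.

Lemma PU (A B : Ob M) : ty2 A B ->
  exists ev, hom (pb (proj (Pi P A B)) A) B ev /\ proj B ∘ ev = qq (proj (Pi P A B)) A /\
  forall f g, cod f = ft A -> hom (pb f A) B g -> proj B ∘ g = qq f A ->
  exists! h, (hom (dom f) (Pi P A B) h /\ proj (Pi P A B) ∘ h = f) /\
    ev ∘ qq h (pb (proj (Pi P A B)) A) = g.
Proof.
  intro HT.
  pose proof (HPi P HT) as [HP1 HP2].
  pose proof HT as (HA & HB & HBA).
  assert (Hp : cod (proj (Pi P A B)) = ft A) by dc.
  destruct (R4 eta HT (h := idm (Pi P A B)) Hp) as (ev & Hev1 & Hev2 & Hev3).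
  { split; dc. }
  { apply comp_idr'; dc. }
  exists ev; split; [exact Hev1|split; [exact Hev2|]].
  intros f g Hf Hg1 Hg2.
  destruct (R1 P HT Hf Hg1 Hg2) as [h Hh].
  pose proof (R1S HT Hh) as [[Hhd Hhc] Hhp].
  exists h. split.
  - split; [split; [split; assumption|assumption]|].
    pose proof (R5 HT Hev3 (u := h) ltac:(dc)) as H5.
    rewrite Hhp in H5. rewrite comp_idl' in H5 by dc.
    exact (R3 HT H5 Hh).
  - intros h' [[[Hh'd Hh'c] Hh'p] Hh'g].
    pose proof (R5 HT Hev3 (u := h') ltac:(dc)) as H5.
    rewrite Hh'p, Hh'g in H5. rewrite comp_idl' in H5 by dc.
    exact (R2 HT Hh H5).
Qed.
End PU2.

Section Core.
Variable M : CtxCat.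

Lemma deg_ft' (X : Ob M) : 0 < deg X -> deg (ft X) = pred (deg X).
Proof. intro H. destruct (deg X) eqn:E; [lia|]. simpl. apply deg_ft; assumption. Qed.

Lemma dproj_hom m (Y : Ob M) : m <= deg Y -> hom Y (ftn m Y) (dproj m Y).
Proof.
  revert Y; induction m as [|m IH]; intros Y Hm; simpl.
  - split; dc.
  - assert (H0 : 0 < deg Y) by lia.
    apply hom_comp with (ft Y); [apply proj_hom; assumption|].
    apply IH. rewrite deg_ft' by assumption. lia.
Qed.

Variable P : PiStr M.
Hypothesis eta : Pi_eta P.


Lemma core (A : Ob M) : 0 < deg A -> forall m (Y : Ob M), m <= deg Y -> ftn m Y = A ->
  exists (R : Ob M) eps, m <= deg R /\ ftn m R = ft A /\
   hom (pb (dproj m R) A) Y eps /\ dproj m Y ∘ eps = qq (dproj m R) A /\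
   forall t phi, cod t = ft A -> hom (pb t A) Y phi -> dproj m Y ∘ phi = qq t A ->
     exists! psi, (hom (dom t) R psi /\ dproj m R ∘ psi = t) /\
       eps ∘ qq psi (pb (dproj m R) A) = phi.
Proof.
  intros HA m; induction m as [|m IH]; intros Y Hm HY.
  - simpl in *. subst Y. exists (ft A), (idm A).
    split; [lia|split; [reflexivity|]].
    rewrite pb_id, qq_id by assumption.
    split; [split; dc|split; [apply comp_idl'; dc|]].
    intros t phi Ht [Hp1 Hp2] Ep.
    rewrite comp_idl' in Ep by assumption. subst phi.
    exists t. split.
    + split; [split; [split; dc|apply comp_idl'; dc]|].
      apply comp_idl'; dc.
    + intros psi [[[Hd Hc] H2] _]. rewrite comp_idl' in H2 by exact Hc. congruence.
  - simpl in HY.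
    assert (H0 : 0 < deg Y) by lia.
    assert (Hm' : m <= deg (ft Y)) by (rewrite deg_ft' by assumption; lia).
    destruct (IH (ft Y) Hm' HY) as (R1 & eps1 & HR1m & HR1f & [He1d He1c] & Ee1 & U1).
    pose proof (dproj_hom Hm') as [HE1d HE1c].
    pose proof (dproj_hom HR1m) as [HDd HDc].
    change (dproj (S m) Y) with (dproj m (ft Y) ∘ proj Y).
    remember (dproj m (ft Y)) as E1 eqn:HE1.
    remember (dproj m R1) as D eqn:HD.
    assert (Hcd : cod D = ft A) by congruence.
    assert (HA1 : 0 < deg (pb D A)) by pos.
    assert (HftA1 : ft (pb D A) = R1) by dc.
    assert (Hce : cod eps1 = ft Y) by assumption.
    assert (HY' : 0 < deg (pb eps1 Y)) by pos.
    assert (HT : ty2 (pb D A) (pb eps1 Y)) by (repeat split; try pos; dc).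
    destruct (PU eta HT) as (ev & [Hevd Hevc] & Eev & Uev).
    pose proof (Pi_form P HT) as [HR0 HRft].
    rewrite HftA1 in HRft.
    exists (Pi P (pb D A) (pb eps1 Y)), (qq eps1 Y ∘ ev).
    change (dproj (S m) (Pi P (pb D A) (pb eps1 Y))) with
      (dproj m (ft (Pi P (pb D A) (pb eps1 Y))) ∘ proj (Pi P (pb D A) (pb eps1 Y))).
    change (ftn (S m) (Pi P (pb D A) (pb eps1 Y))) with
      (ftn m (ft (Pi P (pb D A) (pb eps1 Y)))).
    rewrite HRft. rewrite <- HD.
    remember (Pi P (pb D A) (pb eps1 Y)) as R eqn:HR.
    assert (Hpr : cod (proj R) = dom D) by dc.
    rewrite pb_comp by assumption.
    rewrite qq_comp by assumption.
    split; [pose proof (deg_ft' HR0) as Hdg; rewrite HRft in Hdg; lia|].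
    split; [congruence|].
    split; [split; dc|].
    split.
    + rassoc. rewrite (comp_rw (pb_comm H0 Hce)) by dc. rassoc.
      rewrite Eev. rewrite comp_assoc by dc. rewrite Ee1. reflexivity.
    + intros t phi Ht [Hpd Hpc] Ephi.
      assert (Hphi1 : hom (pb t A) (ft Y) (proj Y ∘ phi)) by (split; dc).
      assert (Ephi1 : E1 ∘ (proj Y ∘ phi) = qq t A)
        by (rewrite comp_assoc by dc; exact Ephi).
      destruct (U1 t (proj Y ∘ phi) Ht Hphi1 Ephi1) as (psi1 & [[[Hp1d Hp1c] Ep1] Eps1] & Up1).
      assert (Hpbt : pb psi1 (pb D A) = pb t A).
      { rewrite <- pb_comp by (try pos; dc). rewrite Ep1. reflexivity. }
      destruct (pbmap_ex (f := eps1) (X := Y) (a := phi) (b := qq psi1 (pb D A)) H0 Hce)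
        as (g & [Hgd Hgc] & Eg1 & Eg2); try dc.
      destruct (Uev psi1 g) as (h & [[[Hhd Hhc] Eh1] Eh2] & Uh); try dc.
      { split; dc. }
      exists h. split.
      * split; [split; [split; dc|]|].
        -- rewrite <- comp_assoc by dc. rewrite Eh1. exact Ep1.
        -- rewrite <- comp_assoc by dc. rewrite Eh2. exact Eg1.
      * intros h' [[[Hh'd Hh'c] Eh'1] Eh'2].
        assert (Hpsi1' : proj R ∘ h' = psi1).
        { symmetry; apply Up1. split; [split; [split; dc|]|].
          - rewrite comp_assoc by dc. exact Eh'1.
          - rewrite qq_comp by (try pos; dc).
            rewrite <- Eev. rewrite <- Eh'2. rassoc.
            rewrite (comp_rw (eq_sym (pb_comm H0 Hce))) by dc. rassoc. reflexivity. }
        apply Uh. split; [split; [split; dc|exact Hpsi1']|].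
        apply (pbmap_uniq H0 Hce); try dc.
        -- rewrite dom_comp by dc. rewrite dom_qq by (try pos; dc).
           rewrite <- pb_comp by (try pos; dc). rewrite Hpsi1', Hpbt. congruence.
        -- rewrite comp_assoc by dc. rewrite Eh'2. congruence.
        -- rewrite Eg2. rewrite comp_assoc by dc. rewrite Eev.
           rewrite <- qq_comp by (try pos; dc). rewrite Hpsi1'. reflexivity.
Qed.
End Core.

Section UAsec.
Variable C : Cat.

Definition UA (pi e r px pr eps : Mor C) : Prop :=
  is_pullback pi r px pr /\ hom (dom px) (dom e) eps /\ e ∘ eps = px /\
  forall t qx qt phi, cod t = cod pi -> is_pullback pi t qx qt ->
    hom (dom qx) (dom e) phi -> e ∘ phi = qx ->
    exists! psi, hom (dom t) (dom r) psi /\ r ∘ psi = t /\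
      forall w, hom (dom qx) (dom px) w -> pr ∘ w = psi ∘ qt -> px ∘ w = qx -> eps ∘ w = phi.

Lemma pb_map (f g p1 p2 a b : Mor C) : is_pullback f g p1 p2 ->
  dom a = dom b -> cod a = dom f -> cod b = dom g -> f ∘ a = g ∘ b ->
  exists u, hom (dom a) (dom p1) u /\ p1 ∘ u = a /\ p2 ∘ u = b.
Proof.
  intros (_ & _ & _ & _ & _ & HU) H1 H2 H3 E.
  destruct (HU a b H1 H2 H3 E) as [u [Hu _]]. exists u; exact Hu.
Qed.

Lemma pb_iso (f g p1 p2 q1 q2 : Mor C) : is_pullback f g p1 p2 -> is_pullback f g q1 q2 ->
  exists i i', hom (dom q1) (dom p1) i /\ hom (dom p1) (dom q1) i' /\
    p1 ∘ i = q1 /\ p2 ∘ i = q2 /\ q1 ∘ i' = p1 /\ q2 ∘ i' = p2 /\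
    i ∘ i' = idm (dom p1) /\ i' ∘ i = idm (dom q1).
Proof.
  intros Hp Hq.
  pose proof Hp as (Hc & Hd & Hc1 & Hc2 & Hsq & _).
  pose proof Hq as (Hc' & Hd' & Hc1' & Hc2' & Hsq' & _).
  destruct (pb_map Hp (a := q1) (b := q2)) as (i & [Hid Hic] & Ei1 & Ei2); try assumption.
  destruct (pb_map Hq (a := p1) (b := p2)) as (i' & [Hi'd Hi'c] & Ei'1 & Ei'2); try assumption.
  exists i, i'. repeat split; try assumption.
  - apply (pb_unique Hp).
    + rewrite dom_comp, dom_idm; congruence.
    + rewrite cod_comp; congruence.
    + rewrite cod_idm; reflexivity.
    + rewrite comp_assoc by congruence. rewrite Ei1, Ei'1. symmetry; apply comp_idr.
    + rewrite comp_assoc by congruence. rewrite Ei2, Ei'2. rewrite Hd. symmetry; apply comp_idr.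
  - apply (pb_unique Hq).
    + rewrite dom_comp, dom_idm; congruence.
    + rewrite cod_comp; congruence.
    + rewrite cod_idm; reflexivity.
    + rewrite comp_assoc by congruence. rewrite Ei'1, Ei1. symmetry; apply comp_idr.
    + rewrite comp_assoc by congruence. rewrite Ei'2, Ei2. rewrite Hd'. symmetry; apply comp_idr.
Qed.
End UAsec.

Section Conv.
Variable M : CtxCat.

Lemma cua_ua (A : Ob M) (e r eps : Mor M) : 0 < deg A -> cod r = ft A ->
  hom (pb r A) (dom e) eps -> e ∘ eps = qq r A ->
  (forall t phi, cod t = ft A -> hom (pb t A) (dom e) phi -> e ∘ phi = qq t A ->
     exists! psi, (hom (dom t) (dom r) psi /\ r ∘ psi = t) /\ eps ∘ qq psi (pb r A) = phi) ->
  UA (proj A) e r (qq r A) (proj (pb r A)) eps.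
Proof.
  intros HA Hr [Hed Hec] Ee U.
  split; [apply pb_square; assumption|].
  split; [split; dc|].
  split; [assumption|].
  intros t qx qt phi Ht Sq [Hpd Hpc] Ep.
  assert (Ht' : cod t = ft A) by dc.
  pose proof (pb_square HA Ht') as Sc.
  destruct (pb_iso Sc Sq) as (i & i' & [Hid Hic] & [Hi'd Hi'c] & Ei1 & Ei2 & Ei'1 & Ei'2 & Eii' & Ei'i).
  pose proof Sq as (_ & Hqd & Hqxc & Hqtc & _).
  rewrite dom_qq in * by dc.
  assert (Hw : forall psi, hom (dom t) (dom r) psi -> r ∘ psi = t ->
     hom (dom qx) (pb r A) (qq psi (pb r A) ∘ i) /\
     proj (pb r A) ∘ (qq psi (pb r A) ∘ i) = psi ∘ qt /\
     qq r A ∘ (qq psi (pb r A) ∘ i) = qx).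
  { intros psi [Hpsd Hpsc] Epsi.
    assert (Hpb : pb psi (pb r A) = pb t A).
    { rewrite <- pb_comp by dc. rewrite Epsi. reflexivity. }
    split; [split; dc|split].
    - rewrite comp_assoc by dc. rewrite pb_comm by (try pos; dc).
      rewrite Hpb. rassoc. rewrite Ei2. reflexivity.
    - rewrite comp_assoc by dc. rewrite <- qq_comp by (try pos; dc).
      rewrite Epsi. exact Ei1. }
  destruct (U t (phi ∘ i') Ht') as (psi & [[[Hpsd Hpsc] Epsi] Eeps] & Ue); try dc.
  { split; dc. }
  { rewrite comp_assoc by dc. rewrite Ep. exact Ei'1. }
  assert (Hpb0 : pb psi (pb r A) = pb t A).
  { rewrite <- pb_comp by dc. rewrite Epsi. reflexivity. }
  exists psi. split.
  - split; [split; assumption|split; [assumption|]].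
    intros w Hw1 Hw2 Hw3.
    destruct (Hw psi (conj Hpsd Hpsc) Epsi) as (Hw'1 & Hw'2 & Hw'3).
    assert (w = qq psi (pb r A) ∘ i) as ->.
    { destruct Hw1, Hw'1. apply (pbmap_uniq HA Hr); try congruence; dc. }
    rewrite comp_assoc by dc. rewrite Eeps. rassoc. rewrite Ei'i.
    apply comp_idr'; dc.
  - intros psi2 (Hps2 & Eps2 & Hall).
    destruct (Hw psi2 Hps2 Eps2) as (Hw'1 & Hw'2 & Hw'3).
    pose proof (Hall _ Hw'1 Hw'2 Hw'3) as E2.
    destruct Hps2 as [Hps2d Hps2c].
    apply Ue. split; [split; [split; assumption|assumption]|].
    assert (Hpb2 : pb psi2 (pb r A) = pb t A) by (rewrite <- pb_comp by dc; rewrite Eps2; reflexivity).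
    rewrite <- E2. rassoc. rewrite Eii'. rewrite comp_idr' by dc. reflexivity.
Qed.
End Conv.

Section Paste.
Variable C : Cat.

Lemma pb_parts (f g p1 p2 : Mor C) : is_pullback f g p1 p2 ->
  cod f = cod g /\ dom p1 = dom p2 /\ cod p1 = dom f /\ cod p2 = dom g /\ f ∘ p1 = g ∘ p2.
Proof. intros (H1 & H2 & H3 & H4 & H5 & _). tauto. Qed.

Lemma paste (f g h p q a b : Mor C) : cod f = dom g ->
  is_pullback g h p q -> is_pullback f p a b -> is_pullback (g ∘ f) h a (q ∘ b).
Proof.
  intros Hfg S2 S1.
  pose proof (pb_parts S2) as (H1 & H2 & H3 & H4 & E2).
  pose proof (pb_parts S1) as (H1' & H2' & H3' & H4' & E1).
  split; [dc|]. split; [dc|]. split; [dc|]. split; [dc|]. split.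
  { rewrite <- comp_assoc by dc. rewrite E1. rewrite comp_assoc by dc. rewrite E2.
    rewrite comp_assoc by dc. reflexivity. }
  intros x y Hxy Hx Hy E.
  rewrite dom_comp in Hx by dc.
  destruct (pb_map S2 (a := f ∘ x) (b := y)) as (v & [Hvd Hvc] & Ev1 & Ev2); try dc.
  { rewrite comp_assoc by dc. exact E. }
  destruct (pb_map S1 (a := x) (b := v)) as (z & [Hzd Hzc] & Ez1 & Ez2); try dc.
  exists z. split.
  - split; [split; dc|split; [assumption|]]. rewrite <- comp_assoc by dc. congruence.
  - intros z' ([Hz'd Hz'c] & Ez'1 & Ez'2).
    apply (pb_unique S1); try dc.
    apply (pb_unique S2); try dc.
    + rewrite !comp_assoc by dc. rewrite <- E1. rewrite <- !comp_assoc by dc.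
      rewrite Ez1, Ez'1. reflexivity.
    + rewrite Ez2, Ev2. rewrite comp_assoc by dc. symmetry; exact Ez'2.
Qed.

Lemma cancel (f g h qx qt c d u : Mor C) : cod f = dom g ->
  is_pullback (g ∘ f) h qx qt -> is_pullback g h c d ->
  hom (dom qx) (dom c) u -> c ∘ u = f ∘ qx -> d ∘ u = qt ->
  is_pullback f c qx u.
Proof.
  intros Hfg Sq S2 [Hud Huc] E1 E2.
  pose proof (pb_parts S2) as (H1 & H2 & H3 & H4 & Es2).
  pose proof (pb_parts Sq) as (H1' & H2' & H3' & H4' & Esq).
  rewrite dom_comp in H3' by dc.
  split; [dc|]. split; [dc|]. split; [dc|]. split; [dc|]. split; [congruence|].
  intros x y Hxy Hx Hy E.
  destruct (pb_map Sq (a := x) (b := d ∘ y)) as (z & [Hzd Hzc] & Ez1 & Ez2); try dc.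
  { rewrite <- comp_assoc by dc. rewrite E. rewrite !comp_assoc by dc. rewrite Es2. reflexivity. }
  assert (Euz : u ∘ z = y).
  { apply (pb_unique S2); try dc.
    - rewrite comp_assoc by dc. rewrite E1. rewrite <- comp_assoc by dc. rewrite Ez1. congruence.
    - rewrite comp_assoc by dc. rewrite E2. exact Ez2. }
  exists z. split.
  - split; [split; dc|split; assumption].
  - intros z' ([Hz'd Hz'c] & Ez'1 & Ez'2).
    apply (pb_unique Sq); try dc.
    rewrite Ez2. rewrite <- Ez'2. rewrite <- E2. rewrite comp_assoc by dc. reflexivity.
Qed.
End Paste.

Section Comp.
Variable C : Cat.

Lemma ua_comp (pi1 pi2 e r1 px1 pr1 eps1 r px2 pr2 eps2 : Mor C) :
  cod pi1 = dom pi2 ->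
  UA pi1 e r1 px1 pr1 eps1 -> UA pi2 r1 r px2 pr2 eps2 ->
  (forall f, cod f = cod pi1 -> exists p1 p2, is_pullback pi1 f p1 p2) ->
  (forall f, cod f = cod pi2 -> exists p1 p2, is_pullback pi2 f p1 p2) ->
  exists px pr eps, UA (pi2 ∘ pi1) e r px pr eps.
Proof.
  intros H12 (S1 & [He1d He1c] & Ee1 & U1) (S2 & [He2d He2c] & Ee2 & U2) PB1 PB2.
  pose proof (pb_parts S1) as (K1 & K2 & K3 & K4 & K5).
  pose proof (pb_parts S2) as (L1 & L2 & L3 & L4 & L5).
  destruct (PB1 px2) as (a & b & Sab); [congruence|].
  pose proof (pb_parts Sab) as (M1 & M2 & M3 & M4 & M5).
  destruct (pb_map S1 (a := a) (b := eps2 ∘ b)) as (w0 & [Hw0d Hw0c] & Ew01 & Ew02); try dc.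
  { rewrite comp_assoc by dc. rewrite Ee2. exact M5. }
  exists a, (pr2 ∘ b), (eps1 ∘ w0).
  split; [apply (paste (p := px2)); assumption|].
  split; [split; dc|].
  split; [rewrite comp_assoc by dc; rewrite Ee1; exact Ew01|].
  intros t qx qt phi Ht Sq [Hpd Hpc] Ep.
  pose proof (pb_parts Sq) as (N1 & N2 & N3 & N4 & N5).
  destruct (PB2 t) as (c & d & Scd); [dc|].
  pose proof (pb_parts Scd) as (O1 & O2 & O3 & O4 & O5).
  destruct (pb_map Scd (a := pi1 ∘ qx) (b := qt)) as (u & Hu & Eu1 & Eu2); try dc.
  { rewrite comp_assoc by dc. exact N5. }
  destruct Hu as [Hud Huc].
  assert (Squ : is_pullback pi1 c qx u).
  { apply (cancel (g := pi2) (h := t) (qt := qt) (d := d)); try assumption. split; dc. }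
  destruct (U1 c qx u phi ltac:(dc) Squ ltac:(split; dc) Ep) as (psi1 & (Hpsi1 & Epsi1 & Wpsi1) & Upsi1).
  destruct (U2 t c d psi1 ltac:(dc) Scd Hpsi1 Epsi1) as (psi & (Hpsi & Epsi & Wpsi) & Upsi).
  exists psi. split.
  - split; [assumption|split; [assumption|]].
    intros w [Hwd Hwc] Ew1 Ew2.
    destruct Hpsi as [Hpsid Hpsic].
    destruct (pb_map S2 (a := c) (b := psi ∘ d)) as (w2 & [Hw2d Hw2c] & Ew21 & Ew22); try dc.
    { rewrite comp_assoc by dc. rewrite Epsi. exact O5. }
    assert (Ew2' : eps2 ∘ w2 = psi1).
    { apply Wpsi; [split; dc|exact Ew22|exact Ew21]. }
    assert (Ebw : b ∘ w = w2 ∘ u).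
    { apply (pb_unique S2); try dc.
      - rewrite comp_assoc by dc. rewrite <- M5. rewrite <- comp_assoc by dc. rewrite Ew2.
        rewrite comp_assoc by dc. rewrite Ew21. symmetry; exact Eu1.
      - rewrite comp_assoc by dc. rewrite Ew1. rewrite comp_assoc by dc. rewrite Ew22.
        rewrite <- comp_assoc by dc. rewrite Eu2. reflexivity. }
    rewrite <- comp_assoc by dc.
    apply Wpsi1.
    + split; dc.
    + rewrite comp_assoc by dc. rewrite Ew02. rewrite <- comp_assoc by dc. rewrite Ebw.
      rewrite comp_assoc by dc. rewrite Ew2'. reflexivity.
    + rewrite comp_assoc by dc. rewrite Ew01. exact Ew2.
  - intros psi' (Hpsi' & Epsi' & Wpsi').
    apply Upsi. split; [exact Hpsi'|split; [exact Epsi'|]].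
    intros w2 [Hw2d Hw2c] Ew21 Ew22.
    destruct Hpsi' as [Hpsi'd Hpsi'c]. destruct Hpsi1 as [Hpsi1d Hpsi1c].
    symmetry. apply Upsi1.
    split; [split; dc|split].
    + rewrite comp_assoc by dc. rewrite Ee2. exact Ew22.
    + intros w1 [Hw1d Hw1c] Ew11 Ew12.
      destruct (pb_map Sab (a := qx) (b := w2 ∘ u)) as (w & [Hwd Hwc] & Ew1 & Ew2); try dc.
      { rewrite comp_assoc by dc. rewrite Ew22. symmetry; exact Eu1. }
      assert (Hw0w : w0 ∘ w = w1).
      { apply (pb_unique S1); try dc.
        - rewrite comp_assoc by dc. rewrite Ew01. congruence.
        - rewrite comp_assoc by dc. rewrite Ew02. rewrite <- comp_assoc by dc. rewrite Ew2.
          rewrite comp_assoc by dc. congruence. }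
      rewrite <- Hw0w. rewrite comp_assoc by dc. apply Wpsi'; [split; dc| |exact Ew1].
      rewrite <- comp_assoc by dc. rewrite Ew2. rewrite comp_assoc by dc. rewrite Ew21.
      rewrite <- comp_assoc by dc. rewrite Eu2. reflexivity.
Qed.
End Comp.

Section Tower.
Variable M : CtxCat.

Fixpoint tpb (f : Mor M) (m : nat) (Y : Ob M) : Ob M * Mor M :=
  match m with
  | 0 => (dom f, f)
  | S m' => let q := snd (tpb f m' (ft Y)) in (pb q Y, qq q Y)
  end.

Lemma pb_idm (Z : Ob M) (f : Mor M) : cod f = Z -> is_pullback (idm Z) f f (idm (dom f)).
Proof.
  intro Hf. split; [dc|]. split; [dc|]. split; [dc|]. split; [dc|]. split.
  { rewrite comp_idl' by dc. symmetry; apply comp_idr. }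
  intros x y Hxy Hx Hy E.
  rewrite comp_idl' in E by dc.
  exists y. split.
  - split; [split; dc|split; [congruence|apply comp_idl'; dc]].
  - intros y' ([Hd Hc] & E1 & E2). rewrite comp_idl' in E2 by assumption. congruence.
Qed.

Lemma tpb_spec m : forall (Y : Ob M) f, m <= deg Y -> cod f = ftn m Y ->
  ftn m (fst (tpb f m Y)) = dom f /\ m <= deg (fst (tpb f m Y)) /\
  hom (fst (tpb f m Y)) Y (snd (tpb f m Y)) /\
  is_pullback (dproj m Y) f (snd (tpb f m Y)) (dproj m (fst (tpb f m Y))).
Proof.
  induction m as [|m IH]; intros Y f Hm Hf.
  - simpl in *. split; [reflexivity|split; [lia|split; [split; dc|]]].
    apply pb_idm; assumption.
  - assert (H0 : 0 < deg Y) by lia.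
    assert (Hm' : m <= deg (ft Y)) by (rewrite deg_ft' by assumption; lia).
    destruct (IH (ft Y) f Hm' Hf) as (E1 & D1 & [Hq1d Hq1c] & S1).
    cbn [tpb fst snd ftn dproj].
    remember (snd (tpb f m (ft Y))) as q.
    remember (fst (tpb f m (ft Y))) as Y1.
    assert (Hft : ft (pb q Y) = Y1) by dc.
    rewrite Hft.
    split; [assumption|].
    split; [pose proof (deg_ft' (pos_pb H0 Hq1c)) as Hd; rewrite Hft in Hd; pose proof (pos_pb H0 Hq1c); lia|].
    split; [split; dc|].
    pose proof (dproj_hom Hm') as [Hpd Hpc].
    apply (paste (p := q)); [dc| exact S1 |].
    apply pb_square; assumption.
Qed.

Lemma dproj_pb k (Z : Ob M) : k <= deg Z ->
  forall f, cod f = cod (dproj k Z) -> exists p1 p2, is_pullback (dproj k Z) f p1 p2.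
Proof.
  intros Hk f Hf. pose proof (dproj_hom Hk) as [_ Hc].
  destruct (tpb_spec Hk (f := f) ltac:(congruence)) as (_ & _ & _ & S).
  eexists; eexists; exact S.
Qed.
End Tower.

Section Iso.
Variable C : Cat.

Lemma ua_iso (pi d e r px pr eps k k' : Mor C) : UA pi d r px pr eps ->
  hom (dom e) (dom d) k -> hom (dom d) (dom e) k' -> d ∘ k = e ->
  k ∘ k' = idm (dom d) -> k' ∘ k = idm (dom e) ->
  UA pi e r px pr (k' ∘ eps).
Proof.
  intros (S & [Hed Hec] & Ee & U) [Hkd Hkc] [Hk'd Hk'c] Edk Ekk' Ek'k.
  pose proof (pb_parts S) as (K1 & K2 & K3 & K4 & K5).
  split; [exact S|]. split; [split; dc|]. split.
  { rewrite <- Edk. rassoc. rewrite (comp_rw Ekk') by dc. rewrite comp_idl' by dc. exact Ee. }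
  intros t qx qt phi Ht Sq [Hpd Hpc] Ep.
  destruct (U t qx qt (k ∘ phi) Ht Sq ltac:(split; dc)) as (psi & (Hpsi & Epsi & Wpsi) & Upsi).
  { rewrite comp_assoc by dc. rewrite Edk. exact Ep. }
  exists psi. split.
  - split; [assumption|split; [assumption|]].
    intros w Hw E1 E2. pose proof (Wpsi w Hw E1 E2) as E3. destruct Hw.
    rassoc. rewrite E3. rewrite comp_assoc by dc. rewrite Ek'k. apply comp_idl'; dc.
  - intros psi' (Hpsi' & Epsi' & Wpsi'). apply Upsi.
    split; [assumption|split; [assumption|]].
    intros w Hw E1 E2. pose proof (Wpsi' w Hw E1 E2) as E3. destruct Hw.
    rewrite <- E3. rassoc. rewrite (comp_rw Ekk') by dc. symmetry; apply comp_idl'; dc.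
Qed.

Lemma pb_idm' (Z : Ob C) (f : Mor C) : cod f = Z -> is_pullback (idm Z) f f (idm (dom f)).
Proof.
  intro Hf. split; [dc|]. split; [dc|]. split; [dc|]. split; [dc|]. split.
  { rewrite comp_idl' by dc. symmetry; apply comp_idr. }
  intros x y Hxy Hx Hy E.
  rewrite comp_idl' in E by dc.
  exists y. split.
  - split; [split; dc|split; [congruence|apply comp_idl'; dc]].
  - intros y' ([Hd Hc] & E1 & E2). rewrite comp_idl' in E2 by dc. congruence.
Qed.

Lemma ua_idm (X : Ob C) (e : Mor C) : cod e = X ->
  UA (idm X) e e e (idm (dom e)) (idm (dom e)).
Proof.
  intro He.
  split; [apply pb_idm'; assumption|]. split; [split; dc|]. split; [apply comp_idr|].
  intros t qx qt phi Ht Sq [Hpd Hpc] Ep.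
  assert (Ht' : cod t = X) by dc.
  destruct (pb_iso (pb_idm' Ht') Sq) as (i & i' & [Hid Hic] & [Hi'd Hi'c] & Ei1 & Ei2 & Ei'1 & Ei'2 & Eii' & Ei'i).
  pose proof (pb_parts Sq) as (K1 & K2 & K3 & K4 & K5).
  rewrite comp_idl' in Ei2 by dc.
  exists (phi ∘ i'). split.
  - split; [split; dc|split].
    + rewrite comp_assoc by dc. rewrite Ep. exact Ei'1.
    + intros w [Hwd Hwc] E1 E2. rewrite comp_idl' in E1 by dc. rewrite comp_idl' by dc.
      rewrite E1. rassoc. rewrite <- Ei2. rewrite Ei'i. apply comp_idr'; dc.
  - intros psi' ([Hpd' Hpc'] & Ep' & W').
    assert (E3 : idm (dom e) ∘ (psi' ∘ qt) = phi).
    { apply W'; [split; dc|rewrite comp_idl' by dc; reflexivity|].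
      rewrite comp_assoc by dc. rewrite Ep'. rewrite <- K5. apply comp_idl'; dc. }
    rewrite comp_idl' in E3 by dc. rewrite <- E3. rassoc. rewrite Ei'2.
    apply comp_idr'; dc.
Qed.
End Iso.

Section Main.
Variable M : CtxCat.
Variable P : PiStr M.
Hypothesis eta : Pi_eta P.

Lemma main n : forall (X : Ob M), n <= deg X -> forall m (Y : Ob M), m <= deg Y -> ftn m Y = X ->
  exists (R : Ob M) k px pr eps, k <= deg R /\ ftn k R = ftn n X /\
    UA (dproj n X) (dproj m Y) (dproj k R) px pr eps.
Proof.
  induction n as [|n IH]; intros X Hn m Y Hm HY.
  - pose proof (dproj_hom Hm) as [Hd Hc].
    exists Y, m, (dproj m Y), (idm (dom (dproj m Y))), (idm (dom (dproj m Y))).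
    split; [assumption|split; [assumption|]].
    simpl. apply ua_idm. congruence.
  - assert (H0 : 0 < deg X) by lia.
    assert (Hn' : n <= deg (ft X)) by (rewrite deg_ft' by assumption; lia).
    destruct (core eta H0 Hm HY) as (R1 & eps1 & HR1m & HR1f & Heps & Ee & U).
    pose proof (dproj_hom Hm) as [HYd HYc].
    pose proof (dproj_hom HR1m) as [HRd HRc].
    assert (UA1 : UA (proj X) (dproj m Y) (dproj m R1) (qq (dproj m R1) X)
                     (proj (pb (dproj m R1) X)) eps1).
    { apply cua_ua; try assumption.
      - congruence.
      - rewrite HYd; exact Heps.
      - rewrite HYd, HRd. exact U. }
    destruct (IH (ft X) Hn' m R1 HR1m HR1f) as (R & k & px2 & pr2 & eps2 & HRk & HRf & UA2).
    destruct (ua_comp (pi1 := proj X) (pi2 := dproj n (ft X)) ltac:(pose proof (dproj_hom Hn') as [? ?]; dc) UA1 UA2)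
      as (px & pr & eps & UA3).
    + intros f Hf. exists (qq f X), (proj (pb f X)). apply pb_square; [assumption|dc].
    + apply dproj_pb; assumption.
    + exists R, k, px, pr, eps. split; [assumption|split; [exact HRf|exact UA3]].
Qed.
End Main.


Unset Implicit Arguments.
Set Strict Implicit.

Theorem lemma5p5 (M : TTModel) (Gamma X : Ob M) (n : nat)
  (hn : n <= deg X) (hX : ftn n X = Gamma) :
  pullback_has_right_adjoint Gamma X (dproj n X).
Proof.
  pose proof (dproj_hom hn) as [HXd HXc].
  split; [split; congruence|].
  intros e (pi' & i & j & Hdp & Hi & Hj & [Hid Hic] & [Hjd Hjc] & Ecomm) He.
  destruct Hdp as (m & Y & Hm & ->).
  destruct Hi as (iv & [Hivd Hivc] & Ei1 & Ei2).
  destruct Hj as (jv & [Hjvd Hjvc] & Ej1 & Ej2).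
  pose proof (dproj_hom Hm) as [HYd HYc].
  destruct (tpb_spec Hm (f := j) ltac:(congruence)) as (HY1 & HY2 & [Hqd Hqc] & Sq).
  remember (fst (tpb j m Y)) as Y2.
  remember (snd (tpb j m Y)) as q.
  pose proof (dproj_hom HY2) as [HY2d HY2c].
  destruct (pb_map Sq (a := idm Y) (b := jv ∘ dproj m Y)) as (q' & [Hq'd Hq'c] & Eq1 & Eq2); try dc.
  { rewrite comp_assoc by dc. rewrite Ej2. rewrite comp_idl' by dc. apply comp_idr'; dc. }
  pose proof (pb_parts Sq) as (K1 & K2 & K3 & K4 & K5).
  assert (Eq3 : q' ∘ q = idm Y2).
  { apply (pb_unique Sq); try dc.
    - rewrite comp_assoc by dc. rewrite Eq1. rewrite comp_idl' by dc. symmetry; apply comp_idr'; dc.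
    - rewrite comp_assoc by dc. rewrite Eq2. rassoc. rewrite K5. rewrite comp_assoc by dc.
      rewrite Ej1. rewrite comp_idl' by dc. symmetry; apply comp_idr'; dc. }
  destruct (main (@tt_eta M) hn (m := m) (Y := Y2) HY2 ltac:(congruence))
    as (R & k & px & pr & eps & HRk & HRf & UA0).
  pose proof (dproj_hom HRk) as [HRd HRc].
  assert (UA1 : UA (dproj n X) e (dproj k R) px pr ((iv ∘ q) ∘ eps)).
  { apply (ua_iso (d := dproj m Y2) (k := q' ∘ i)); try assumption.
    - split; dc.
    - split; dc.
    - rewrite comp_assoc by dc. rewrite Eq2. rassoc. rewrite Ecomm.
      rewrite comp_assoc by dc. rewrite Ej1. apply comp_idl'; dc.
    - rassoc. rewrite (comp_rw Ei2) by dc. rewrite comp_idl' by dc. rewrite Eq3. f_equal; dc.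
    - rassoc. rewrite (comp_rw Eq1) by dc. rewrite comp_idl' by dc. rewrite Ei1. f_equal; dc. }
  destruct UA1 as (S1 & Heps & Ee & U1).
  exists (dproj k R), px, pr, ((iv ∘ q) ∘ eps).
  split.
  { exists (dproj k R), (idm (dom (dproj k R))), (idm (cod (dproj k R))).
    split; [exists k, R; split; [assumption|reflexivity]|].
    split; [exists (idm (dom (dproj k R))); split; [split; dc|split; rewrite comp_idl' by dc; dc]|].
    split; [exists (idm (cod (dproj k R))); split; [split; dc|split; rewrite comp_idl' by dc; dc]|].
    split; [split; dc|]. split; [split; dc|].
    rewrite comp_idr' by dc. rewrite comp_idl' by dc. reflexivity. }
  split; [congruence|].
  split; [exact S1|]. split; [exact Heps|]. split; [exact Ee|].
  intros t qx qt phi _ Ht. apply U1. congruence.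
Qed.
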